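(* Let $\mathcal X$ be an input space and $\mathcal Y$ an output space, let $r:\mathcal X\times\mathcal Y\to\mathbb R$ be a reward function, let $\pi_0(y\mid x)$ be the current conditional policy, assumed absolutely continuous, let $A(x,y)$ denote the advantage function (of the form $r(x,y)+\lambda(x)$ for a baseline $\lambda:\mathcal X\to\mathbb R$), and fix $\gamma\ge 0$ and $\eta>0$. Let $\delta\mathcal F(\pi_0;\delta\pi)=\int_{\mathcal Y}r(x,y)\,\delta\pi(y\mid x)\,dy$ be the first variation of the expected return functional $\mathcal F(\pi)=\mathbb E_{y\sim\pi(y\mid x)}[r(x,y)]$. Consider, over all admissible variations $\delta\pi(y\mid x)$ (signed measures with $\int\delta\pi(y\mid x)\,dy=0$ for every $x$), the local update problem with the $\gamma$-weighted variational metric \[ \max_{\delta\pi}\Big\{\delta\mathcal F(\pi_0;\delta\pi)-\frac{1}{2\eta}\int_{\mathcal Y}\frac{(\delta\pi(y\mid x))^2}{|A(x,y)|^{\gamma}\,\pi_0(y\mid x)}\,dy\Big\}. \] Then the optimal ascent satisfies \[ \delta\pi(y\mid x)\propto\pi_0(y\mid x)\,\mathrm{sign}(A(x,y))\,|A(x,y)|^{1+\gamma}. \]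
   Context: The $\gamma$-weighted variational metric on admissible variations at $\pi_0$ is $\langle\delta\pi_1,\delta\pi_2\rangle^{\gamma}_{\pi_0}=\int_{\mathcal Y}\frac{\delta\pi_1(y\mid x)\,\delta\pi_2(y\mid x)}{|A(x,y)|^{\gamma}\pi_0(y\mid x)}\,dy$, a weighted version of the Fisher–Rao metric; advantage functions differing by a function of $x$ alone are regarded as equivalent (they give the same policy gradient). *)

(* Defs.v *)
From HB Require Import structures.
From mathcomp Require Import all_boot all_order all_algebra.
From mathcomp Require Import all_classical all_reals all_analysis.
Set Implicit Arguments. Unset Strict Implicit. Unset Printing Implicit Defensive.
Import Order.TTheory GRing.Theory Num.Theory.
Local Open Scope classical_set_scope.
Local Open Scope ring_scope.

Section VariationalUpdate.
Context {R : realType} {d : measure_display} {Y : measurableType d}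
  (mu : {measure set Y -> \bar R}).

Definition vweight (gamma : R) (A pi0 : Y -> R) (y : Y) : R :=
  `|A y| `^ gamma * pi0 y.

Definition vmetric (gamma : R) (A pi0 : Y -> R) (f g : Y -> R) : R :=
  Rintegral mu setT (fun y => f y * g y / vweight gamma A pi0 y).

Definition first_variation (r f : Y -> R) : R :=
  Rintegral mu setT (fun y => r y * f y).

(* admissible variations (at fixed x): densities w.r.t. dy with total mass 0,
   vanishing where the weight vanishes, with finite first variation and
   finite gamma-weighted metric norm *)
Definition admissible (gamma : R) (r A pi0 : Y -> R) (f : Y -> R) : Prop :=
  measurable_fun setT f /\
  mu.-integrable setT (EFin \o f) /\
  (\int[mu]_y (f y)%:E = 0)%E /\
  {ae mu, forall y, vweight gamma A pi0 y = 0 -> f y = 0} /\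
  mu.-integrable setT (fun y => (r y * f y)%:E) /\
  mu.-integrable setT (fun y => (f y ^+ 2 / vweight gamma A pi0 y)%:E).

Definition local_objective (gamma eta : R) (r A pi0 : Y -> R) (f : Y -> R) : R :=
  first_variation r f - (2 * eta)^-1 * vmetric gamma A pi0 f f.

Definition is_optimal_ascent (gamma eta : R) (r A pi0 : Y -> R) (f : Y -> R) : Prop :=
  admissible gamma r A pi0 f /\
  forall g, admissible gamma r A pi0 g ->
    local_objective gamma eta r A pi0 g <= local_objective gamma eta r A pi0 f.

End VariationalUpdate.

(* Main.v *)
Require Import Defs.
From HB Require Import structures.
From mathcomp Require Import all_boot all_order all_algebra.
From mathcomp Require Import all_classical all_reals all_analysis.
From mathcomp Require Import measurable_realfun.
From mathcomp Require Import ring lra.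
Import Order.TTheory GRing.Theory Num.Theory.
Local Open Scope classical_set_scope.
Local Open Scope ring_scope.

Lemma key (R : realType) (d : measure_display) (Y : measurableType d)
  (mu : {measure set Y -> \bar R}) (rr p : Y -> R) (lam0 gamma eta : R) :
  0 <= gamma -> 0 < eta ->
  measurable_fun setT rr -> measurable_fun setT p ->
  (forall y, 0 <= p y) ->
  (\int[mu]_y (p y)%:E = 1)%E ->
  let a := fun y => rr y + lam0 in
  mu.-integrable setT (fun y => (p y * `|a y| `^ (2 + gamma))%:E) ->
  (\int[mu]_y (`|a y| `^ gamma * p y * a y)%:E = 0)%E ->
  (exists f, is_optimal_ascent mu gamma eta rr a p f) /\
  (forall f, is_optimal_ascent mu gamma eta rr a p f ->
     exists c : R, 0 < c /\
       {ae mu, forall y, f y = c * (p y * Num.sg (a y) * `|a y| `^ (1 + gamma))}).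
Proof.
move=> g0 eta0 mrr mp p0 pint a ik0 hcent.
set w := vweight gamma a p.
have w0 y : 0 <= w y by rewrite /w /vweight mulr_ge0 ?powR_ge0.
have ma : measurable_fun setT a by apply: measurable_funD => //.
have mw : measurable_fun setT w.
  apply: measurable_funM => //.
  apply: (measurableT_comp (measurable_powR _)).
  exact: measurableT_comp.
have mwinv : measurable_fun setT (fun y => (w y)^-1).
  have -> : (fun y => (w y)^-1) = (fun y => w y `^ (-1)).
    by apply: funext => y; rewrite powR_inv1.
  exact: (measurableT_comp (measurable_powR _)).
have iZ : forall (c : R) (f : Y -> R), mu.-integrable setT (EFin \o f) ->
    mu.-integrable setT (EFin \o (fun y => c * f y)).
  move=> c f /(integrableZl measurableT c) /(eq_integrable measurableT); apply => y _.
  by rewrite /= EFinM.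
pose fs y := eta * (w y * a y).
pose k y := w y * (a y * a y).
have kE y : k y = p y * `|a y| `^ (2 + gamma).
  have h2 : 0 < 2 + gamma by lra.
  rewrite /k /w /vweight powRD; last by rewrite gt_eqF.
  rewrite powR_mulrn // real_normK ?num_real //; ring.
have k0 y : 0 <= k y by rewrite kE mulr_ge0 ?powR_ge0.
have ik : mu.-integrable setT (EFin \o k).
  by apply: eq_integrable ik0 => // y _ /=; rewrite kE.
have ip : mu.-integrable setT (EFin \o p).
  apply/integrableP; split; first exact/measurable_EFinP.
  rewrite (eq_integral (fun y => (p y)%:E)); first by rewrite pint ltry.
  by move=> y _ /=; rewrite ger0_norm.
have bnd y : `|a y| `^ gamma * `|a y| <= 1 + `|a y| `^ gamma * (a y * a y).
  have u0 : 0 <= `|a y| `^ gamma by apply: powR_ge0.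
  have n0 : 0 <= `|a y| by [].
  have aa : a y * a y = `|a y| * `|a y| by by rewrite -normrM ger0_norm // -expr2 sqr_ge0.
  rewrite aa.
  have [le1|gt1] := leP `|a y| 1.
    have h1 : `|a y| `^ gamma <= 1.
      have := @ge0_ler_powR R gamma g0 `|a y| 1.
      rewrite powR1; apply => //; by rewrite nnegrE.
    nra.
  have h3 : 0 <= `|a y| `^ gamma * `|a y| * (`|a y| - 1).
    by rewrite !mulr_ge0 // subr_ge0 ltW.
  nra.
have iwa : mu.-integrable setT (EFin \o (fun y => w y * a y)).
  apply: (le_integrable measurableT (g := EFin \o (fun y => p y + k y))).
  - by apply/measurable_EFinP; apply: measurable_funM.
  - move=> y _; rewrite lee_fin (ger0_norm (addr_ge0 (p0 y) (k0 y))).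
    rewrite normrM (ger0_norm (w0 y)) /k /w /vweight.
    have := ler_wpM2l (p0 y) (bnd y); nra.
  - apply: (eq_integrable measurableT ((EFin \o p) \+ (EFin \o k))) => //.
    exact: integrableD.
have ifs : mu.-integrable setT (EFin \o fs).
  have := integrableZl measurableT eta iwa.
  move/(eq_integrable measurableT); apply => y _.
  by rewrite /= EFinM.
have fs_int0 : (\int[mu]_y (fs y)%:E = 0)%E.
  rewrite (eq_integral (fun y => (eta%:E * (w y * a y)%:E)%E)); last first.
    by move=> y _; rewrite EFinM.
  rewrite integralZl //.
  have -> : (\int[mu]_y (w y * a y)%:E)%E = 0%E by exact: hcent.
  by rewrite mule0.
have fsq y : fs y * fs y / w y = eta ^+ 2 * k y.
  rewrite /fs /k; have [->|wn0] := eqVneq (w y) 0; first by rewrite !mul0r mulr0 invr0 !mulr0.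
  by field.
have adm_fs : admissible mu gamma rr a p fs.
  split; first by apply: measurable_funM; [exact: measurable_cst|exact: measurable_funM].
  split; first exact: ifs.
  split; first exact: fs_int0.
  split; first by apply: aeW => y hw; rewrite /fs; move: hw; rewrite /w => ->; rewrite mul0r mulr0.
  split.
    have := integrableB measurableT (integrableZl measurableT eta ik) (integrableZl measurableT lam0 ifs).
    move/(eq_integrable measurableT); apply => y _.
    rewrite /= -!EFinM -EFinB /fs /k /a; congr EFin; ring.
  have := integrableZl measurableT (eta ^+ 2) ik.
  move/(eq_integrable measurableT); apply => y _.
  by rewrite /= expr2 fsq.
pose Kc := Rintegral mu setT k.
pose D (g : Y -> R) y := (g y - fs y) ^+ 2 / w y.
have D0 g y : 0 <= D g y by rewrite /D divr_ge0 ?sqr_ge0.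
have Dfacts : forall g, admissible mu gamma rr a p g ->
    (mu.-integrable setT (EFin \o D g)) /\
    (local_objective mu gamma eta rr a p g = eta * Kc / 2 - (2 * eta)^-1 * Rintegral mu setT (D g)).
  move=> g [mg [ig [gint0 [gae [irg iq]]]]].
  have iq' : mu.-integrable setT (EFin \o (fun y => g y * g y / w y)).
    by apply: eq_integrable iq => // y _; rewrite /= expr2.
  have ila : mu.-integrable setT (EFin \o (fun y => a y * g y)).
    have := integrableD measurableT irg (integrableZl measurableT lam0 ig).
    move/(eq_integrable measurableT); apply => y _.
    by rewrite /= -EFinM -EFinD /a mulrDl [lam0 * _]mulrC.
  pose RHS y := g y * g y / w y - (2 * eta) * (a y * g y) + eta ^+ 2 * k y.
  have iRHS1 : mu.-integrable setT (EFin \o (fun y => g y * g y / w y - (2 * eta) * (a y * g y))).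
    have := integrableB measurableT iq' (integrableZl measurableT (2 * eta) ila).
    move/(eq_integrable measurableT); apply => y _.
    by rewrite /= EFinM EFinB.
  have iRHS : mu.-integrable setT (EFin \o RHS).
    have := integrableD measurableT iRHS1 (integrableZl measurableT (eta ^+ 2) ik).
    move/(eq_integrable measurableT); apply => y _.
    by rewrite /= -EFinM -EFinD.
  have aeD : {ae mu, forall y, D g y = RHS y}.
    apply: filterS gae => y h.
    have [hw|wn0] := eqVneq (w y) 0.
      rewrite /D /RHS /k hw (h hw) invr0 !mulr0 !mul0r mulr0 subr0 addr0.
      by [].
    rewrite /D /RHS /k /fs; field.
    exact: wn0.
  have mD : measurable_fun setT (D g).
    apply: measurable_funM => //.
    apply: measurable_funX; apply: measurable_funB => //.
    by apply: measurable_funM; [exact: measurable_cst|exact: measurable_funM].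
  have intDE : (\int[mu]_y (D g y)%:E = \int[mu]_y (RHS y)%:E)%E.
    apply: ae_eq_integral => //.
    - exact/measurable_EFinP.
    - exact: measurable_int iRHS.
    - by apply: filterS aeD => y h _; rewrite /= h.
  have iD : mu.-integrable setT (EFin \o D g).
    apply/integrableP; split; first exact/measurable_EFinP.
    rewrite (eq_integral (fun y => (D g y)%:E)); last first.
      by move=> y _ /=; rewrite ger0_norm.
    rewrite intDE.
    have /fineK <- := integrable_fin_num measurableT iRHS.
    exact: ltry.
  split; first exact: iD.
  have LE : Rintegral mu setT (fun y => a y * g y) = Rintegral mu setT (fun y => rr y * g y).
    rewrite (@eq_Rintegral _ _ _ mu setT (fun y => rr y * g y + lam0 * g y)); last first.
      by move=> y _; rewrite /a mulrDl [lam0 * _]mulrC.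
    rewrite RintegralD //; last exact: iZ.
    rewrite RintegralZl //.
    have -> : Rintegral mu setT g = 0 by rewrite /Rintegral gint0.
    by rewrite mulr0 addr0.
  have RE : Rintegral mu setT (D g) = Rintegral mu setT (fun y => g y * g y / w y)
      - 2 * eta * Rintegral mu setT (fun y => a y * g y) + eta ^+ 2 * Kc.
    rewrite /Rintegral intDE -/(Rintegral mu setT RHS).
    rewrite /RHS RintegralD //; last exact: iZ.
    rewrite RintegralB //; last exact: iZ.
    rewrite !RintegralZl //.
  rewrite /local_objective /first_variation /vmetric.
  rewrite RE LE.
  change (vweight gamma a p) with w.
  by field; rewrite gt_eqF.
have Dfs0 : Rintegral mu setT (D fs) = 0.
  rewrite (@eq_Rintegral _ _ _ mu setT (fun=> 0)); last first.
    by move=> y _; rewrite /D subrr expr0n /= mul0r.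
  by rewrite Rintegral_cst // mul0r.
have objfs : local_objective mu gamma eta rr a p fs = eta * Kc / 2.
  by have [_ ->] := Dfacts fs adm_fs; rewrite Dfs0 mulr0 subr0.
have he : 0 < (2 * eta)^-1 by rewrite invr_gt0 mulr_gt0.
split.
  exists fs; split => // g ag.
  have [_ ->] := Dfacts g ag.
  rewrite objfs.
  have h : 0 <= Rintegral mu setT (D g) by apply: Rintegral_ge0 => y _; exact: D0.
  nra.
move=> f [af hopt].
have [iDf objf] := Dfacts f af.
have := hopt fs adm_fs; rewrite objf objfs => hle.
have h : 0 <= Rintegral mu setT (D f) by apply: Rintegral_ge0 => y _; exact: D0.
have RD0 : Rintegral mu setT (D f) = 0.
  apply: le_anti; apply/andP; split; [nra|exact: h].
have intD0 : (\int[mu]_y (D f y)%:E = 0)%E.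
  have : ((Rintegral mu setT (D f))%:E = 0%E) by rewrite RD0.
  rewrite /Rintegral fineK //.
  by have := integrable_fin_num measurableT iDf.
have aeD0 : ae_eq mu setT (EFin \o D f) (cst 0%E).
  apply/ae_eq_integral_abs => //.
    exact: measurable_int iDf.
  rewrite (eq_integral (fun y => (D f y)%:E)) //.
  by move=> y _ /=; rewrite ger0_norm.
exists eta; split => //.
case: af => [_ [_ [_ [gae _]]]].
apply: filterS2 aeD0 gae => y h1 h2.
have h1' : D f y = 0 by move: (h1 I) => /= [].
have fE : f y = fs y.
  have [hw|wn0] := eqVneq (w y) 0.
    by rewrite (h2 hw) /fs hw mul0r mulr0.
  move: h1'; rewrite /D => /eqP; rewrite mulf_eq0 invr_eq0 (negbTE wn0) orbF.
  by rewrite sqrf_eq0 subr_eq0 => /eqP.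
rewrite fE /fs /w /vweight.
have h1g : 0 < 1 + gamma by lra.
rewrite powRD; last by rewrite gt_eqF.
rewrite powRr1 //.
rewrite [RHS](_ : _ = eta * (`|a y| `^ gamma * p y * (Num.sg (a y) * `|a y|))); last by ring.
by rewrite mulr_sg_norm.
Qed.

Theorem theorem3 (R : realType) (d : measure_display) (Y : measurableType d)
  (mu : {measure set Y -> \bar R}) (X : Type)
  (r : X -> Y -> R) (pi0 : X -> Y -> R) (lam : X -> R) (gamma eta : R) :
  0 <= gamma -> 0 < eta ->
  (forall x, measurable_fun setT (r x)) ->
  (forall x, measurable_fun setT (pi0 x)) ->
  (forall x y, 0 <= pi0 x y) ->
  (forall x, (\int[mu]_y (pi0 x y)%:E = 1)%E) ->
  let A := fun x y => r x y + lam x in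
  (* regularity: the candidate ascent has finite weighted norm *)
  (forall x, mu.-integrable setT (fun y => (pi0 x y * `|A x y| `^ (2 + gamma))%:E)) ->
  (* A is the advantage: the baseline centres it w.r.t. the metric weight *)
  (forall x, (\int[mu]_y (`|A x y| `^ gamma * pi0 x y * A x y)%:E = 0)%E) ->
  forall x,
    (exists f, is_optimal_ascent mu gamma eta (r x) (A x) (pi0 x) f) /\
    (forall f, is_optimal_ascent mu gamma eta (r x) (A x) (pi0 x) f ->
       exists c : R, 0 < c /\
         {ae mu, forall y,
            f y = c * (pi0 x y * Num.sg (A x y) * `|A x y| `^ (1 + gamma))}).
Proof.
move=> g0 eta0 mr mp p0 pint A ik hc x.
have := @key R d Y mu (r x) (pi0 x) (lam x) gamma eta g0 eta0 (mr x) (mp x) (p0 x) (pint x).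
move=> /(_ (ik x) (hc x)).
by [].
Qed.
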